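(* Let $\Sigma\in\mathbb{R}^{p\times p}$ with $\Sigma\succ0$, $\theta_0\in\mathbb{R}^p$, $S=\mathrm{supp}(\theta_0)$, $\xi>0$, and let $\widehat\theta^\infty$ be the unique minimizer of $\theta\mapsto\frac12\langle\theta-\theta_0,\Sigma(\theta-\theta_0)\rangle+\xi\|\theta\|_1$. Let $T\supseteq S$ and $v\in\{+1,0,-1\}^p$ with $\mathrm{supp}(v)=T$. Then $\mathrm{sign}(\widehat\theta^\infty)=v$ if and only if $$\|\Sigma_{T^c,T}\Sigma_{T,T}^{-1}v_T\|_\infty\le1\quad\text{and}\quad v_T=\mathrm{sign}\big(\theta_{0,T}-\xi\Sigma_{T,T}^{-1}v_T\big).$$ Further, if these hold, $\widehat\theta^\infty_{T^c}=0$ and $\widehat\theta^\infty_T=\theta_{0,T}-\xi\Sigma_{T,T}^{-1}v_T$.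
   Context: $\mathrm{sign}(u)_i=+1,0,-1$ according as $u_i>0,=0,<0$; $A_{I,J}$ submatrix with rows in $I$, columns in $J$; $A_{T,T}^{-1}=(A_{T,T})^{-1}$; $v_T$ restriction to $T$; $T^c=[p]\setminus T$. *)

(* Defs.v *)
From HB Require Import structures.
From mathcomp Require Import all_boot all_order all_algebra.
Set Implicit Arguments. Unset Strict Implicit. Unset Printing Implicit Defensive.
Import Order.TTheory GRing.Theory Num.Theory.
Local Open Scope ring_scope.

(* Vectors in R^p are column vectors 'cV[R]_p; index sets are T : {set 'I_p}.
   Sub-vectors / sub-matrices are indexed by 'I_#|T| through enum_val
   (i.e. the elements of T in increasing order). *)

Section Defs.
Variable R : realFieldType.
Variable p : nat.

Definition posdef (A : 'M[R]_p) : Prop :=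
  A^T = A /\ forall x : 'cV[R]_p, x != 0 -> 0 < (x^T *m A *m x) 0 0.

Definition supp (u : 'cV[R]_p) : {set 'I_p} := [set i | u i 0 != 0].

Definition sign (u : 'cV[R]_p) : 'cV[R]_p := map_mx (fun x => Num.sg x) u.

Definition norm1 (u : 'cV[R]_p) : R := \sum_i `|u i 0|.

Definition subvec (T : {set 'I_p}) (u : 'cV[R]_p) : 'cV[R]_#|T| :=
  \col_(i < #|T|) u (enum_val i) 0.

Definition subM (I J : {set 'I_p}) (A : 'M[R]_p) : 'M[R]_(#|I|, #|J|) :=
  \matrix_(i < #|I|, j < #|J|) A (enum_val i) (enum_val j).

Definition supnorm_le (n : nat) (w : 'cV[R]_n) (c : R) : Prop :=
  forall i, `|w i 0| <= c.

Definition lasso_obj (Sigma : 'M[R]_p) (theta0 : 'cV[R]_p) (xi : R)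
  (theta : 'cV[R]_p) : R :=
  2^-1 * ((theta - theta0)^T *m Sigma *m (theta - theta0)) 0 0
  + xi * norm1 theta.

Definition is_minimizer (f : 'cV[R]_p -> R) (x : 'cV[R]_p) : Prop :=
  forall y, f x <= f y.

End Defs.

(* Main.v *)
Require Import Defs.
From HB Require Import structures.
From mathcomp Require Import all_boot all_order all_algebra.
From mathcomp Require Import ring lra.
Import Order.TTheory GRing.Theory Num.Theory.
Local Open Scope ring_scope.

Section Scal.
Variable R : realFieldType.

Lemma lim_lemma (A B : R) : 0 <= B ->
  (forall t, 0 < t -> t <= 1 -> 0 <= t * A + t ^+ 2 * B) -> 0 <= A.
Proof.
move=> B0 H; rewrite leNgt; apply/negP => A0.
have BA : 0 < B - A by lra.
pose t := - A / (B - A).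
have t0 : 0 < t by rewrite /t divr_gt0 // oppr_gt0.
have t1 : t <= 1 by rewrite /t ler_pdivrMr // mul1r; lra.
have E : (A + t * B) * (B - A) = - A ^+ 2.
  by rewrite /t; field; rewrite subr_eq0; apply/eqP => E; lra.
have := H t t0 t1.
have -> : t * A + t ^+ 2 * B = t * (A + t * B) by ring.
rewrite pmulr_rge0 // => H2.
have : 0 <= (A + t * B) * (B - A) by rewrite mulr_ge0 // ltW.
rewrite E; nra.
Qed.

Lemma kkt_of (xi g a : R) : 0 < xi ->
  (forall c, 0 <= c * g + xi * (`|a + c| - `|a|)) ->
  (a != 0 -> g = - xi * Num.sg a) /\ (a = 0 -> `|g| <= xi).
Proof.
move=> xi0 H; split.
  move=> a0; have H1 := H (- a); have H2 := H a.
  move: H1 H2; rewrite subrr normr0.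
  have [ap|an|ae] := ltrgtP a 0.
  - rewrite ltr0_sg // ltr0_norm // ltr0_norm; last lra.
    move=> H1 H2; nra.
  - rewrite gtr0_sg // gtr0_norm // gtr0_norm; last lra.
    move=> H1 H2; nra.
  - by rewrite ae eqxx in a0.
move=> ae; have H1 := H 1; have H2 := H (-1).
move: H1 H2; rewrite ae !add0r normr0 normrN normr1 => H1 H2.
rewrite ler_norml; lra.
Qed.

Lemma of_kkt (xi g a : R) : 0 < xi ->
  (a != 0 -> g = - xi * Num.sg a) -> (a = 0 -> `|g| <= xi) ->
  (forall c, 0 <= c * g + xi * (`|a + c| - `|a|)).
Proof.
move=> xi0 H1 H2 c.
have [ap|an|ae] := ltrgtP a 0.
- rewrite (H1 (ltr0_neq0 ap)) ltr0_sg // [`|a|]ltr0_norm //.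
  have := ler_norm (a + c); have := ler_normr (a + c) (a + c).
  move=> _ h1; have h2 : - (a + c) <= `|a + c| by rewrite -normrN ler_norm.
  have h3 : 0 <= xi * (`|a+c| + (a + c)) by apply: mulr_ge0; lra.
  nra.
- rewrite (H1 (lt0r_neq0 an)) gtr0_sg // [`|a|]gtr0_norm //.
  have h1 := ler_norm (a + c).
  have h3 : 0 <= xi * (`|a+c| - (a + c)) by apply: mulr_ge0; lra.
  nra.
- move: (H2 ae); rewrite ae add0r normr0 subr0 => hg.
  have h1 : - (c * g) <= `|c * g| by rewrite -normrN ler_norm.
  move: h1; rewrite normrM => h1.
  have : `|c| * `|g| <= `|c| * xi by rewrite ler_wpM2l.
  nra.
Qed.
End Scal.

Section Mat.
Variable R : realFieldType.
Variable p : nat.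
Variables (Sigma : 'M[R]_p) (theta0 : 'cV[R]_p) (xi : R).
Hypothesis Spd : posdef Sigma.
Hypothesis xi0 : 0 < xi.

Definition q (x y : 'cV[R]_p) : R := (x^T *m Sigma *m y) 0 0.

Lemma qE x y : q x y = \sum_i x i 0 * (Sigma *m y) i 0.
Proof. by rewrite /q -mulmxA mxE; apply: eq_bigr => i _; rewrite mxE. Qed.

Lemma q_sym x y : q x y = q y x.
Proof.
rewrite /q; have -> : (x^T *m Sigma *m y) 0 0 = ((x^T *m Sigma *m y)^T) 0 0.
  by rewrite [RHS]mxE.
by rewrite !trmx_mul trmxK mulmxA (proj1 Spd).
Qed.

Lemma qDl x y z : q (x + y) z = q x z + q y z.
Proof. by rewrite !qE -big_split; apply: eq_bigr => i _; rewrite mxE mulrDl. Qed.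

Lemma qBl x y z : q (x - y) z = q x z - q y z.
Proof. by rewrite !qE -sumrB; apply: eq_bigr => i _; rewrite !mxE mulrBl. Qed.

Lemma qZl t x z : q (t *: x) z = t * q x z.
Proof. by rewrite !qE mulr_sumr; apply: eq_bigr => i _; rewrite mxE mulrA. Qed.

Lemma qDr x y z : q z (x + y) = q z x + q z y.
Proof. by rewrite q_sym qDl !(q_sym z). Qed.

Lemma qZr t x z : q z (t *: x) = t * q z x.
Proof. by rewrite q_sym qZl (q_sym z). Qed.

Lemma q_ge0 x : 0 <= q x x.
Proof.
have [->|x0] := eqVneq x 0; last exact: ltW (proj2 Spd x x0).
by rewrite qE big1 // => i _; rewrite mxE mul0r.
Qed.

Local Notation f := (lasso_obj Sigma theta0 xi).

Lemma fE (th : 'cV[R]_p) : f th = 2^-1 * q (th - theta0) (th - theta0) + xi * norm1 th.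
Proof. by []. Qed.

Lemma quad_exp d a : q (d + a) (d + a) = q a a + 2 * q d a + q d d.
Proof. rewrite qDl !qDr (q_sym a d); ring. Qed.

Lemma f_id th y : f y = f th + q (y - th) (th - theta0)
   + 2^-1 * q (y - th) (y - th) + xi * (norm1 y - norm1 th).
Proof.
rewrite !fE.
have -> : y - theta0 = (y - th) + (th - theta0) by rewrite addrA subrK.
rewrite quad_exp.
by field.
Qed.

Definition VI (th : 'cV[R]_p) := forall y,
  0 <= q (y - th) (th - theta0) + xi * (norm1 y - norm1 th).

Lemma VI_strict th y : VI th -> f y <= f th -> y = th.
Proof.
move=> H Hf; have := H y; have := f_id th y => E.
move: Hf; rewrite E => Hf H1.
have Hq : q (y - th) (y - th) <= 0 by lra.
apply/eqP; rewrite -subr_eq0; apply/negP => /negP d0.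
have := proj2 Spd _ d0; rewrite -/(q _ _); lra.
Qed.

Lemma norm1_conv (th y : 'cV[R]_p) (t : R) : 0 <= t -> t <= 1 ->
  norm1 (th + t *: (y - th)) <= (1 - t) * norm1 th + t * norm1 y.
Proof.
move=> t0 t1; rewrite /norm1 !mulr_sumr -big_split /=.
apply: ler_sum => i _; rewrite !mxE.
have -> : th i 0 + t * (y i 0 - th i 0) = (1 - t) * th i 0 + t * y i 0 by ring.
apply: le_trans (ler_normD _ _) _.
by rewrite !normrM (ger0_norm t0) ger0_norm ?subr_ge0.
Qed.

Lemma min_VI th : is_minimizer f th -> VI th.
Proof.
move=> Hm y.
apply: (@lim_lemma _ _ (2^-1 * q (y - th) (y - th))).
  by rewrite mulr_ge0 ?q_ge0 // invr_ge0.
move=> t t0 t1.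
have := Hm (th + t *: (y - th)).
rewrite (f_id th (th + t *: (y - th))).
have -> : th + t *: (y - th) - th = t *: (y - th) by rewrite addrC addKr.
rewrite !qZl !qZr.
have := norm1_conv th y t (ltW t0) t1 => Hn.
have Hn' : xi * (norm1 (th + t *: (y - th)) - norm1 th) <=
           xi * (t * (norm1 y - norm1 th)).
  by rewrite ler_pM2l //; lra.
move=> H.
have -> : t * (q (y - th) (th - theta0) + xi * (norm1 y - norm1 th)) +
   t ^+ 2 * (2^-1 * q (y - th) (y - th)) =
   t * q (y - th) (th - theta0) + 2^-1 * (t * (t * q (y - th) (y - th))) +
   xi * (t * (norm1 y - norm1 th)) by ring.
lra.
Qed.

Definition KKT (th : 'cV[R]_p) := forall i,
  (th i 0 != 0 -> (Sigma *m (th - theta0)) i 0 = - xi * Num.sg (th i 0)) /\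
  (th i 0 = 0 -> `|(Sigma *m (th - theta0)) i 0| <= xi).

Lemma VI_sum (th y : 'cV[R]_p) : q (y - th) (th - theta0) + xi * (norm1 y - norm1 th) =
  \sum_i ((y i 0 - th i 0) * (Sigma *m (th - theta0)) i 0
           + xi * (`|th i 0 + (y i 0 - th i 0)| - `|th i 0|)).
Proof.
rewrite qE /norm1 -sumrB mulr_sumr -big_split /=.
by apply: eq_bigr => i _; rewrite !mxE (addrC (th i 0)) subrK.
Qed.

Lemma VI_KKT th : VI th -> KKT th.
Proof.
move=> H i; apply: kkt_of => // c.
pose y := \col_j (if j == i then th j 0 + c else th j 0).
have := H y; rewrite VI_sum (bigD1 i) //= big1 ?addr0.
  rewrite !mxE eqxx.
  by have -> : th i 0 + c - th i 0 = c by rewrite addrAC subrr add0r.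
move=> j /negbTE ji; rewrite !mxE ji subrr mul0r addr0 subrr mulr0.
by rewrite addr0.
Qed.

Lemma KKT_VI th : KKT th -> VI th.
Proof.
move=> H y; rewrite VI_sum; apply: sumr_ge0 => i _.
by have [H1 H2] := H i; apply: of_kkt.
Qed.

End Mat.

Section Sub.
Variable R : realFieldType.
Variable p : nat.

Lemma sum_supp (T : {set 'I_p}) (F : 'I_p -> R) :
  (forall i, i \notin T -> F i = 0) ->
  \sum_i F i = \sum_(k < #|T|) F (enum_val k).
Proof.
move=> H; rewrite (bigID (mem T)) /= [X in _ + X]big1 ?addr0.
  exact: big_enum_val.
by move=> i /H.
Qed.

Lemma subvec_mul (T U : {set 'I_p}) (S : 'M[R]_p) (x : 'cV[R]_p) :
  (forall i, i \notin T -> x i 0 = 0) ->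
  subvec U (S *m x) = subM U T S *m subvec T x.
Proof.
move=> H; apply/matrixP => k j; rewrite (ord1 j) !mxE (sum_supp T).
  by apply: eq_bigr => l _; rewrite !mxE.
by move=> i /H ->; rewrite mulr0.
Qed.

Definition ext (T : {set 'I_p}) (w : 'cV[R]_#|T|) : 'cV[R]_p :=
  \col_i (if [pick k : 'I_#|T| | enum_val k == i] is Some k then w k 0 else 0).

Arguments ext {T} w.

Lemma ext_val (T : {set 'I_p}) (w : 'cV[R]_#|T|) (k : 'I_#|T|) : ext w (enum_val k) 0 = w k 0 :> R.
Proof.
rewrite /ext mxE; case: pickP => [k' /eqP /enum_val_inj -> // | /(_ k)].
by rewrite eqxx.
Qed.

Lemma ext_out (T : {set 'I_p}) (w : 'cV[R]_#|T|) i : i \notin T -> ext w i 0 = 0 :> R.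
Proof.
move=> iT; rewrite /ext mxE; case: pickP => [k /eqP ki | //].
by move: iT; rewrite -ki enum_valP.
Qed.

Lemma subvec_ext (T : {set 'I_p}) (w : 'cV[R]_#|T|) : subvec T (ext w) = w.
Proof. by apply/matrixP => k j; rewrite (ord1 j) mxE ext_val. Qed.

Lemma inT_val (T : {set 'I_p}) i : i \in T -> exists k : 'I_#|T|, i = enum_val k.
Proof. by move=> iT; exists (enum_rank_in iT i); rewrite enum_rankK_in. Qed.

Lemma subvecB (T : {set 'I_p}) (x y : 'cV[R]_p) : subvec T (x - y) = subvec T x - subvec T y.
Proof. by apply/matrixP => k j; rewrite !mxE. Qed.

Lemma subvec_sign (T : {set 'I_p}) (x : 'cV[R]_p) : subvec T (sign x) = sign (subvec T x).
Proof. by apply/matrixP => k j; rewrite !mxE. Qed.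

Lemma STT_unit (Sigma : 'M[R]_p) (T : {set 'I_p}) : posdef Sigma -> subM T T Sigma \in unitmx.
Proof.
move=> Spd; rewrite unitmxE unitfE; apply/negP => /det0P [v v0 vA].
pose x := v^T.
have Ssym : (subM T T Sigma)^T = subM T T Sigma.
  apply/matrixP => i j; rewrite !mxE.
  by rewrite -[Sigma in RHS](proj1 Spd) mxE.
have Sx : subM T T Sigma *m x = 0 by rewrite -Ssym -trmx_mul vA trmx0.
pose z := ext x.
have z0 : z != 0.
  apply/negP => /eqP ez; move/negP: v0; apply; apply/eqP.
  rewrite -[v]trmxK -/x -(subvec_ext T x) -/z ez.
  by apply/matrixP => i j; rewrite !mxE.
have := proj2 Spd z z0; rewrite -/(@q R p Sigma z z) qE.
rewrite (sum_supp T); last by move=> i iT; rewrite ext_out ?mul0r.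
rewrite big1 ?ltxx // => k _.
have E : subvec T (Sigma *m z) = subM T T Sigma *m subvec T z.
  by apply: subvec_mul => i iT; apply: ext_out.
have := congr1 (fun M : 'cV[R]_#|T| => M k 0) E.
by rewrite subvec_ext Sx !mxE => ->; rewrite mulr0.
Qed.

End Sub.

Arguments ext {R p T} w.

Lemma subvecE (R : realFieldType) p (T : {set 'I_p}) (X : 'cV[R]_p) k :
  subvec T X k 0 = X (enum_val k) 0.
Proof. by rewrite mxE. Qed.

Lemma entryNZ (R : realFieldType) n (a : R) (M : 'cV[R]_n) k :
  (- (a *: M)) k 0 = - (a * M k 0).
Proof. by rewrite !mxE. Qed.

Theorem lemma3p3 (R : realFieldType) (p : nat)
  (Sigma : 'M[R]_p) (theta0 : 'cV[R]_p) (xi : R)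
  (thetahat : 'cV[R]_p) (T : {set 'I_p}) (v : 'cV[R]_p) :
  posdef Sigma ->
  0 < xi ->
  is_minimizer (lasso_obj Sigma theta0 xi) thetahat ->
  supp theta0 \subset T ->
  (forall i, v i 0 \in [:: 1; 0; -1]) ->
  supp v = T ->
  let STT := subM T T Sigma in
  let vT := subvec T v in
  let cond := supnorm_le (subM (~: T) T Sigma *m (invmx STT *m vT)) 1 /\
              vT = sign (subvec T theta0 - xi *: (invmx STT *m vT)) in
  (sign thetahat = v <-> cond) /\
  (cond -> subvec (~: T) thetahat = 0 /\
           subvec T thetahat = subvec T theta0 - xi *: (invmx STT *m vT)).
Proof.
move=> Spd xi0 Hmin Hsupp _ HvT; cbv zeta.
set STT := subM T T Sigma; set vT := subvec T v.
set M' := subM (~: T) T Sigma.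
set u := invmx STT *m vT; set w := subvec T theta0 - xi *: u.
have Hv0 : forall i, i \notin T -> v i 0 = 0.
  by move=> i; rewrite -HvT inE negbK => /eqP.
have Hv1 : forall i, i \in T -> v i 0 != 0 by move=> i; rewrite -HvT inE.
have Ht0 : forall i, i \notin T -> theta0 i 0 = 0.
  move=> i iT; apply/eqP; apply: contraNT iT => h.
  by apply: (subsetP Hsupp); rewrite inE.
have Hu : STT \in unitmx by apply: STT_unit.
have Gs : forall th : 'cV[R]_p, (forall i, i \notin T -> th i 0 = 0) ->
  forall U, subvec U (Sigma *m (th - theta0)) =
            subM U T Sigma *m (subvec T th - subvec T theta0).
  move=> th ht U; rewrite (@subvec_mul _ _ T) ?subvecB // => i iT.
  by rewrite !mxE ht // Ht0 // subr0.
have vTE : forall k, vT k 0 = v (enum_val k) 0 by move=> k; rewrite mxE.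
have notinC : forall k : 'I_#|~: T|, enum_val k \notin T.
  by move=> k; have := enum_valP k; rewrite inE.
have Hext : supnorm_le (M' *m u) 1 /\ vT = sign w -> thetahat = ext w.
  case=> C1 C2.
  have hs : forall i, i \notin T -> ext w i 0 = 0 by move=> i iT; apply: ext_out.
  have D : subvec T (ext w) - subvec T theta0 = - (xi *: u).
    by rewrite subvec_ext /w addrAC subrr add0r.
  have GT := Gs _ hs T; rewrite D mulmxN -scalemxAr mulmxA mulmxV // mul1mx in GT.
  have GC := Gs _ hs (~: T); rewrite D mulmxN -scalemxAr in GC.
  have K : KKT _ _ Sigma theta0 xi (ext w).
    move=> i; have [iT|iT] := boolP (i \in T).
      have [k ->] := @inT_val _ _ _ iT; rewrite ext_val.
      have wk : Num.sg (w k 0) = vT k 0 by rewrite C2 [RHS]mxE.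
      have wk0 : w k 0 != 0 by rewrite -sgr_eq0 wk vTE Hv1 // enum_valP.
      split => [_ | /eqP]; last by rewrite (negbTE wk0).
      have := congr1 (fun M : 'cV[R]_#|T| => M k 0) GT.
      by rewrite subvecE entryNZ => ->; rewrite wk mulNr.
    have iC : i \in ~: T by rewrite inE.
    have [k ->] := @inT_val _ _ _ iC; rewrite hs ?notinC //.
    split => [| _]; first by rewrite eqxx.
    have := congr1 (fun M : 'cV[R]_#|~: T| => M k 0) GC.
    rewrite subvecE entryNZ => ->.
    rewrite normrN normrM gtr0_norm // -[X in _ <= X]mulr1 ler_pM2l //.
  apply: (@VI_strict _ _ Sigma theta0 xi Spd _ _ (@KKT_VI _ _ Sigma theta0 xi xi0 _ K)).
  exact: Hmin.
have Hsw : vT = sign w -> sign (ext w) = v.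
  move=> C2; apply/matrixP => i j; rewrite (ord1 j) mxE.
  have [iT|iT] := boolP (i \in T).
    have [k ->] := @inT_val _ _ _ iT; rewrite ext_val -vTE C2 [RHS]mxE //.
  by rewrite ext_out // sgr0 Hv0.
have HB : sign thetahat = v -> supnorm_le (M' *m u) 1 /\ vT = sign w.
  move=> Hs.
  have hsi : forall i, Num.sg (thetahat i 0) = v i 0.
    by move=> i; rewrite -Hs mxE.
  have ht : forall i, i \notin T -> thetahat i 0 = 0.
    by move=> i iT; apply/eqP; rewrite -sgr_eq0 hsi Hv0.
  have K := @VI_KKT _ _ Sigma theta0 xi xi0 _
              (@min_VI _ _ Sigma theta0 xi Spd xi0 _ Hmin).
  have GT : subvec T (Sigma *m (thetahat - theta0)) = - (xi *: vT).
    apply/matrixP => k j; rewrite (ord1 j) subvecE entryNZ.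
    have nz : thetahat (enum_val k) 0 != 0.
      by rewrite -sgr_eq0 hsi Hv1 // enum_valP.
    by rewrite (proj1 (K (enum_val k)) nz) hsi vTE mulNr.
  rewrite Gs // in GT.
  have D : subvec T thetahat - subvec T theta0 = - (xi *: u).
    have := congr1 (mulmx (invmx STT)) GT.
    by rewrite mulKmx // mulmxN -scalemxAr.
  have Ew : subvec T thetahat = w by rewrite /w -D addrC subrK.
  split; last by rewrite -Ew -subvec_sign Hs.
  move=> k.
  have GC := Gs _ ht (~: T); rewrite D mulmxN -scalemxAr in GC.
  have := proj2 (K (enum_val k)) (ht _ (notinC k)).
  have := congr1 (fun M : 'cV[R]_#|~: T| => M k 0) GC.
  rewrite subvecE entryNZ => ->.
  rewrite normrN normrM gtr0_norm // -[X in _ <= X]mulr1 ler_pM2l //.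
split.
  split; first exact: HB.
  by move=> C; rewrite (Hext C); apply: Hsw; case: C.
move=> C; rewrite (Hext C); split; last exact: subvec_ext.
apply/matrixP => k j; rewrite (ord1 j) subvecE ext_out ?notinC //.
by rewrite mxE.
Qed.
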